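(* Let $G$ be a finite group and $H\leqslant G$ a subgroup. If $g_2(H)\geq N$, then $g_2(G)\geq N$.
   Context: For a finite group $G$ and positive integer $N$, $r_N(G)$ is the minimum number of generators among subgroups of $G$ of index at most $N$, and $g_k(G)=\max\{N : |G|\geq N \text{ and } r_N(G)\geq k\}$. *)

(* Defs.v *)
From mathcomp Require Import all_boot all_fingroup.
Set Implicit Arguments. Unset Strict Implicit. Unset Printing Implicit Defensive.
Local Open Scope group_scope.

Definition ngens (gT : finGroupType) (K : {set gT}) : nat :=
  \big[minn/#|K|]_(A : {set gT} | (A \subset K) && (<<A>> == K)) #|A|.

(* r_N(G): minimum of d(K) over subgroups K of G with |G:K| <= N.
   (The default d(G) is only relevant for N = 0, never used.) *)
Definition rN (gT : finGroupType) (N : nat) (G : {set gT}) : nat :=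
  \big[minn/ngens G]_(K : {group gT} | (K \subset G) && (#|G : K| <= N)) ngens K.

(* g_k(G) = max { N >= 1 : N <= |G| and r_N(G) >= k }, with value 0 if
   this set is empty. *)
Definition gk (gT : finGroupType) (k : nat) (G : {set gT}) : nat :=
  \max_(1 <= M < #|G|.+1 | k <= rN M G) M.

(* Main.v *)
Require Import Defs.
From mathcomp Require Import all_boot all_fingroup.
From mathcomp Require Import all_solvable.
Lemma bigminn_le (I : finType) (P : pred I) (F : I -> nat) x j :
  P j -> (\big[minn/x]_(i | P i) F i <= F j)%N.
Proof.
move=> Pj.
have: j \in index_enum I by rewrite mem_index_enum.
elim: (index_enum I) => //= a r IH; rewrite inE big_cons.
case/orP=> [/eqP<-|/IH h]; first by rewrite Pj geq_minl.
case: (P a) => //; exact: leq_trans (geq_minr _ _) h.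
Qed.

Lemma bigminn_ge (I : finType) (P : pred I) (F : I -> nat) x k :
  (k <= x)%N -> (forall i, P i -> k <= F i)%N -> (k <= \big[minn/x]_(i | P i) F i)%N.
Proof.
move=> kx kF; apply: (big_ind (fun v => k <= v)%N) => //.
by move=> a b ka kb; rewrite leq_min ka kb.
Qed.

Local Open Scope group_scope.

Lemma ngens_cyclic (gT : finGroupType) (K : {group gT}) :
  cyclic K -> (ngens K <= 1)%N.
Proof.
case/cyclicP=> x ->; rewrite /ngens.
apply: leq_trans (@bigminn_le _ _ _ _ [set x] _) _ => /=.
  by rewrite sub1set cycle_id eqxx.
by rewrite cards1.
Qed.

Lemma ngens_ncyclic (gT : finGroupType) (K : {group gT}) :
  ~~ cyclic K -> (2 <= ngens K)%N.
Proof.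
move=> nc; rewrite /ngens; apply: bigminn_ge.
  rewrite ltnNge; apply: contra nc => /card_le1_trivg->.
  exact: cyclic1.
move=> A /andP[_ /eqP defK]; rewrite ltnNge; apply: contra nc => A1.
have [|[x Ax]] := set_0Vmem A.
  by move=> A0; rewrite -defK A0 gen0 cyclic1.
have eA : A = [set x].
  by apply/eqP; rewrite eq_sym eqEcard sub1set Ax cards1.
by rewrite -defK eA; exact: cycle_cyclic.
Qed.

Lemma index_le (gT : finGroupType) (G H K : {group gT}) :
  H \subset G -> (#|H : H :&: K| <= #|G : K|)%N.
Proof.
move=> sHG; rewrite indexgI; apply: subset_leq_card; exact: imsetS.
Qed.

Lemma rN_mono (gT : finGroupType) (G H : {group gT}) M :
  H \subset G -> (1 <= M)%N -> (2 <= rN M H)%N -> (2 <= rN M G)%N.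
Proof.
move=> sHG M1 r2.
have key : forall K : {group gT}, K \subset G -> (#|G : K| <= M)%N ->
    (2 <= ngens K)%N.
  move=> K sKG iK; apply: ngens_ncyclic; apply/negP => cK.
  have cHK : cyclic (H :&: K)%G by apply: cyclicS cK; exact: subsetIr.
  have := @ngens_cyclic _ _ cHK.
  suff: (2 <= ngens (H :&: K)%G)%N by case: (ngens _) => [|[|]].
  apply: leq_trans r2 _; rewrite /rN; apply: bigminn_le.
  by rewrite subsetIl /= (leq_trans (@index_le _ _ _ K sHG)).
rewrite /rN; apply: bigminn_ge.
  by apply: key => //; rewrite indexgg.
by move=> K /andP[] /key; apply.
Qed.

Theorem mainTheorem15 (gT : finGroupType) (G H : {group gT}) (N : nat) :
  H \subset G -> N <= gk 2 H -> N <= gk 2 G.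
Proof.
move=> sHG; rewrite /gk.
move=> hN; apply: leq_trans hN _.
apply/bigmax_leqP_seq => i; rewrite mem_index_iota => /andP[i1 iH] r2.
apply: leq_bigmax_seq; last exact: rN_mono sHG i1 r2.
rewrite mem_index_iota i1 /=; apply: leq_trans iH _.
by rewrite ltnS subset_leq_card.
Qed.
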